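(* Let $p\neq 2$ be a prime and $G=Z_{p^{\lambda_1}}\times\cdots\times Z_{p^{\lambda_n}}$ with $0<\lambda_1<\cdots<\lambda_n$. The poset $J(G)$ is self-dual; an order-reversing involution of $J(G)$ is given by $J(i,j)\mapsto J(i,\lambda_i-j+1)$.
   Context: Tuples are ordered componentwise; for $\mathbf 0\le\mathbf a\le(\lambda_1,\dots,\lambda_n)$, $T(\mathbf a)$ is the set of $(g_1,\dots,g_n)\in G$ with $|g_i|=p^{a_i}$, and $R(\mathbf a)=\bigcup_{\mathbf b\le\mathbf a}T(\mathbf b)$. For $i\in\{1,\dots,n\}$ and $j\in\{1,\dots,\lambda_i\}$, $J(i,j)=R(\mathbf a)$ where $a_k=j$ for $k\ge i$ and $a_k=\max\{0,\,j-(\lambda_i-\lambda_k)\}$ for $k<i$. $J(G)$ is the set of all $J(i,j)$ (these are exactly the join-irreducible elements of the lattice of characteristic subgroups of $G$), partially ordered by inclusion. *)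

(* Defs.v *)
From mathcomp Require Import all_boot all_order all_algebra all_fingroup.
Set Implicit Arguments. Unset Strict Implicit. Unset Printing Implicit Defensive.

(* Indices are 0-based: paper's index i in {1..n} is i : 'I_n here.
   lam i = lambda_{i+1}. *)

Definition Gtype (p n : nat) (lam : 'I_n -> nat) : finType :=
  {dffun forall i : 'I_n, 'Z_(p ^ lam i)}.

(* R(a) = union over 0 <= b <= a of T(b), T(b) = {g | |g_k| = p^(b_k)}. *)
Definition Rset (p n : nat) (lam : 'I_n -> nat) (a : 'I_n -> nat)
  : {set Gtype p lam} :=
  [set g : Gtype p lam |
     [forall k : 'I_n, [exists b : 'I_(a k).+1, #[g k]%g == p ^ b]]].

Definition Jexp (n : nat) (lam : 'I_n -> nat) (i : 'I_n) (j : nat)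
  : 'I_n -> nat :=
  fun k => if (i <= k)%N then j else maxn 0 (j - (lam i - lam k)).

Definition Jset (p n : nat) (lam : 'I_n -> nat) (i : 'I_n) (j : nat)
  : {set Gtype p lam} := Rset p lam (Jexp lam i j).

Definition JG (p n : nat) (lam : 'I_n -> nat) : {set {set Gtype p lam}} :=
  [set X | [exists i : 'I_n, [exists j : 'I_(lam i).+1,
             (0 < j)%N && (X == Jset p lam i j)]]].

(* Main.v *)
Require Import Defs.
From mathcomp Require Import all_boot all_order all_algebra all_fingroup.
From mathcomp Require Import all_solvable zify.

Section S.
Variables (p n : nat) (lam : 'I_n -> nat).
Hypothesis pp : prime p.
Hypothesis lpos : forall i, (0 < lam i)%N.

Lemma ordx (k : 'I_n) (m : nat) : (m <= lam k)%N ->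
  #[((Zp1 : 'Z_(p ^ lam k)) ^+ (p ^ (lam k - m)))%g]%g = p ^ m.
Proof.
move=> hm.
have p1 : (1 < p ^ lam k)%N.
  by rewrite -(expn0 p) ltn_exp2l ?prime_gt1.
have o1 : #[(Zp1 : 'Z_(p ^ lam k))]%g = p ^ lam k.
  by rewrite order_Zp1 Zp_cast.
rewrite orderXdiv o1; last by rewrite dvdn_exp2l ?leq_subr.
by rewrite -{1}(subnKC hm) expnD mulnK // expn_gt0 prime_gt0.
Qed.

Lemma Rsub (a a' : 'I_n -> nat) (k0 : 'I_n) :
  Rset p lam a \subset Rset p lam a' -> (a k0 <= lam k0)%N -> (a k0 <= a' k0)%N.
Proof.
move=> /subsetP sub hk.
pose x (k : 'I_n) : 'Z_(p ^ lam k) := ((Zp1 : 'Z_(p ^ lam k)) ^+ (p ^ (lam k - a k0)))%g.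
pose g : Gtype p lam := [ffun k => if k == k0 then x k else 0%R].
have : g \in Rset p lam a.
  rewrite inE; apply/forallP => k; apply/existsP.
  rewrite ffunE; case: eqP => [->|_].
    by exists ord_max; rewrite /x ordx.
  by exists ord0; rewrite expn0 order1.
move/sub; rewrite inE => /forallP /(_ k0) /existsP [b].
rewrite ffunE eqxx /x ordx // eqn_exp2l ?prime_gt1 // => /eqP ->.
by rewrite -ltnS ltn_ord.
Qed.

Lemma Rmono (a a' : 'I_n -> nat) :
  (forall k, a k <= a' k)%N -> Rset p lam a \subset Rset p lam a'.
Proof.
move=> h; apply/subsetP => g; rewrite !inE => /forallP H.
apply/forallP => k; have /existsP [b hb] := H k; apply/existsP.
have hb' : (b < (a' k).+1)%N by rewrite ltnS (leq_trans _ (h k)) // -ltnS.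
by exists (Ordinal hb').
Qed.
End S.

Section S2.
Variables (p n : nat) (lam : 'I_n -> nat).
Hypothesis pp : prime p.
Hypothesis lpos : forall i, (0 < lam i)%N.
Hypothesis lmono : forall i k : 'I_n, (i < k)%N -> (lam i < lam k)%N.

Lemma Jsub_iff (i i' : 'I_n) (j j' : nat) :
  (1 <= j <= lam i)%N -> (1 <= j' <= lam i')%N ->
  (Jset p lam i j \subset Jset p lam i' j') <->
  (j <= j' /\ lam i' - j' <= lam i - j)%N.
Proof.
move=> hj hj'; split.
  move=> sub.
  have h1 := @Rsub p n lam pp lpos _ _ i sub.
  have h2 := @Rsub p n lam pp lpos _ _ i' sub.
  move: h1 h2; rewrite /Jexp /= !leqnn.
  case: (ltngtP i i') => [lt|lt|/val_inj eq].
  - have := lmono _ _ lt; move=> hl h1 h2.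
    have {h1} := h1 ltac:(lia); have {h2} := h2 ltac:(lia); lia.
  - have := lmono _ _ lt; move=> hl h1 h2.
    have {h1} := h1 ltac:(lia); have {h2} := h2 ltac:(lia); lia.
  - subst i'; move=> h1 h2.
    have {h1} := h1 ltac:(lia); lia.
move=> [h1 h2]; apply: Rmono => k; rewrite /Jexp.
case: (ltngtP i k) => [lt|lt|/val_inj eq];
case: (ltngtP i' k) => [lt'|lt'|/val_inj eq'];
  rewrite ?(ltnW lt) ?(ltnW lt') ?leqnn ?(leqNgt i) ?(leqNgt i') ?lt ?lt' /=;
  try subst k; try subst i'; try subst i;
  rewrite ?leqnn;
  try (have := lmono _ _ lt); try (have := lmono _ _ lt'); lia.
Qed.
End S2.

Section S3.
Variables (p n : nat) (lam : 'I_n -> nat).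
Hypothesis pp : prime p.
Hypothesis lpos : forall i, (0 < lam i)%N.
Hypothesis lmono : forall i k : 'I_n, (i < k)%N -> (lam i < lam k)%N.

Lemma Jinj (i i' : 'I_n) (j j' : nat) :
  (1 <= j <= lam i)%N -> (1 <= j' <= lam i')%N ->
  Jset p lam i j = Jset p lam i' j' -> i = i' /\ j = j'.
Proof.
move=> hj hj' e.
have [a1 a2] := (@Jsub_iff p n lam pp lpos lmono _ _ _ _ hj hj').1 ltac:(by rewrite e).
have [b1 b2] := (@Jsub_iff p n lam pp lpos lmono _ _ _ _ hj' hj).1 ltac:(by rewrite e).
have ej : j = j' by lia.
have el : lam i = lam i' by lia.
split=> //; case: (ltngtP i i') => [lt|lt|/val_inj //].
- by have := lmono _ _ lt; rewrite el ltnn.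
- by have := lmono _ _ lt; rewrite el ltnn.
Qed.

Definition M := (\max_(k : 'I_n) lam k).+1.

Lemma lamM (i : 'I_n) : (lam i < M)%N.
Proof. by rewrite ltnS (leq_bigmax i). Qed.

Definition fJ (X : {set Gtype p lam}) : {set Gtype p lam} :=
  if [pick ij : 'I_n * 'I_M | (1 <= ij.2 <= lam ij.1)%N && (X == Jset p lam ij.1 ij.2)]
  is Some ij then Jset p lam ij.1 (lam ij.1 - ij.2 + 1) else X.

Lemma fJE (i : 'I_n) (j : nat) : (1 <= j <= lam i)%N ->
  fJ (Jset p lam i j) = Jset p lam i (lam i - j + 1).
Proof.
move=> hj; rewrite /fJ; case: pickP => [[i' j'] /= /andP [hj' /eqP e]|].
  by have [-> ->] := Jinj i' i j' j hj' hj (esym e).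
have hjM : (j < M)%N by apply: leq_ltn_trans (lamM i); case/andP: hj.
by move=> /(_ (i, Ordinal hjM)) /=; rewrite hj eqxx.
Qed.
End S3.

Theorem mainTheorem17 (p n : nat) (lam : 'I_n -> nat) :
  prime p -> p != 2 ->
  (forall i : 'I_n, (0 < lam i)%N) ->
  (forall i k : 'I_n, (i < k)%N -> (lam i < lam k)%N) ->
  exists f : {set Gtype p lam} -> {set Gtype p lam},
    [/\ (forall (i : 'I_n) (j : nat), (1 <= j <= lam i)%N ->
           f (Jset p lam i j) = Jset p lam i (lam i - j + 1)),
        (forall X, X \in JG p lam -> f X \in JG p lam),
        (forall X, X \in JG p lam -> f (f X) = X) &
        (forall X Y, X \in JG p lam -> Y \in JG p lam ->
           X \subset Y -> f Y \subset f X)].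
Proof.
move=> pp _ lpos lmono.
have inJ : forall X, X \in JG p lam ->
    exists i j, (1 <= j <= lam i)%N /\ X = Jset p lam i j.
  move=> X; rewrite inE => /existsP [i /existsP [j /andP [j0 /eqP ->]]].
  by exists i, j; rewrite j0 -ltnS ltn_ord.
have fE := @fJE p n lam pp lpos lmono.
exists (@fJ p n lam); split => //.
- move=> X /inJ [i [j [hj ->]]]; rewrite fE //.
  rewrite inE; apply/existsP; exists i; apply/existsP.
  have hb : (lam i - j + 1 < (lam i).+1)%N by lia.
  by exists (Ordinal hb); rewrite /= addn1 ltnS leq0n eqxx.
- move=> X /inJ [i [j [hj ->]]]; rewrite !fE //; last by lia.
  by congr Jset; lia.
- move=> X Y /inJ [i [j [hj ->]]] /inJ [i' [j' [hj' ->]]].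
  move/(@Jsub_iff p n lam pp lpos lmono _ _ _ _ hj hj') => [h1 h2].
  rewrite !fE //; apply/(@Jsub_iff p n lam pp lpos lmono); lia.
Qed.
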